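(* Let $\Omega\subset\mathbb{R}^2_+$ be a bounded Lipschitz open set with $[-\varepsilon_0,\varepsilon_0]\times\{0\}\subset\partial\Omega$, let $\varepsilon\in(0,\varepsilon_0]$, $\lambda\in\mathbb R$, and let $u\in\mathcal Q_\varepsilon$ be a nontrivial weak solution of $-\Delta u=\lambda u$ in $\Omega$, $u=0$ on $\partial\Omega\setminus\Gamma_\varepsilon$, $\partial_\nu u=0$ on $\Gamma_\varepsilon$. Let $j_L,j_R$ be odd positive integers and $\beta_L,\beta_R\in\mathbb R\setminus\{0\}$ be such that, with $\boldsymbol\theta(t)=(\cos t,\sin t)$ and $\boldsymbol\tau(t)=(-\sin t,\cos t)$, as $\delta\to0^+$: $\delta^{-j_L/2}u((-\varepsilon,0)+\delta\boldsymbol\theta(t))\to\beta_L\cos(\frac{j_L}{2}t)$ and $\delta^{-j_R/2}u((\varepsilon,0)+\delta\boldsymbol\theta(t))\to\beta_R\sin(\frac{j_R}{2}t)$ in $C^{1,\sigma}([0,\pi])$, and $\delta^{-j_L/2+1}\nabla u((-\varepsilon,0)+\delta\boldsymbol\theta(t))\to\frac{j_L\beta_L}{2}\big(\cos(\frac{j_L}2t)\boldsymbol\theta(t)-\sin(\frac{j_L}2t)\boldsymbol\tau(t)\big)$, $\delta^{-j_R/2+1}\nabla u((\varepsilon,0)+\delta\boldsymbol\theta(t))\to\frac{j_R\beta_R}{2}\big(\sin(\frac{j_R}2t)\boldsymbol\theta(t)+\cos(\frac{j_R}2t)\boldsymbol\tau(t)\big)$ in $C^{0,\sigma}([0,\pi])$,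 for all $\sigma\in(0,1)$. Define $$M(\varepsilon,u,\lambda)=\lim_{\delta\to0^+}\int_{\mathbb{R}^2_+\cap\partial A^\varepsilon_\delta}\Big(\tfrac12|\nabla u|^2x\cdot\mathbf n-\frac{\partial u}{\partial\mathbf n}(x\cdot\nabla u)-\tfrac\lambda2u^2\,x\cdot\mathbf n\Big)ds,$$ where $A^\varepsilon_\delta=D^+_\delta(-\varepsilon,0)\cup D^+_\delta(\varepsilon,0)$ and $\mathbf n$ is the unit normal to $\partial A^\varepsilon_\delta$ pointing into $A^\varepsilon_\delta$. Then the limit exists and $$M(\varepsilon,u,\lambda)=\begin{cases}0,&j_L>1,\ j_R>1,\\-\varepsilon\frac\pi8\beta_L^2,&j_L=1,\ j_R>1,\\-\varepsilon\frac\pi8\beta_R^2,&j_L>1,\ j_R=1,\\-\varepsilon\frac\pi8(\beta_L^2+\beta_R^2),&j_L=j_R=1.\end{cases}$$ In particular $M(\varepsilon,u,\lambda)\le0$.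
   Context: $\Gamma_\varepsilon=[-\varepsilon,\varepsilon]\times\{0\}$, $\mathcal Q_\varepsilon=\{u\in H^1(\Omega):\text{trace of }u=0\text{ on }\partial\Omega\setminus\Gamma_\varepsilon\}$. $D^+_\delta(a)=\{x\in\mathbb{R}^2:|x-a|<\delta,\ x_2>0\}$. The orientation of $\mathbf n$ is that of the exterior normal to the region $D^+_r\setminus A^\varepsilon_\delta$ (with $D^+_r$ the upper half-disk of radius $r>\varepsilon+\delta$ centered at $0$), i.e. on the half-circle $\{|x\mp(\varepsilon,0)|=\delta, x_2>0\}$ one has $\mathbf n=-(x\mp(\varepsilon,0))/\delta$. *)

(* Defs.v *)
From Stdlib Require Import Reals Lra.
Open Scope R_scope.

Definition open2 (Om : R -> R -> Prop) : Prop :=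
  forall x1 x2, Om x1 x2 -> exists r, 0 < r /\
    forall y1 y2, (y1 - x1)^2 + (y2 - x2)^2 < r^2 -> Om y1 y2.

Definition bounded2 (Om : R -> R -> Prop) : Prop :=
  exists K, forall x1 x2, Om x1 x2 -> Rabs x1 <= K /\ Rabs x2 <= K.

Definition in_boundary2 (Om : R -> R -> Prop) (p1 p2 : R) : Prop :=
  ~ Om p1 p2 /\
  forall r, 0 < r -> exists y1 y2, (y1 - p1)^2 + (y2 - p2)^2 < r^2 /\ Om y1 y2.

Definition helmholtz_in (Om : R -> R -> Prop) (lam : R)
  (u ux uy uxx uyy : R -> R -> R) : Prop :=
  forall x1 x2, Om x1 x2 ->
    derivable_pt_lim (fun s => u s x2) x1 (ux x1 x2) /\
    derivable_pt_lim (fun s => u x1 s) x2 (uy x1 x2) /\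
    derivable_pt_lim (fun s => ux s x2) x1 (uxx x1 x2) /\
    derivable_pt_lim (fun s => uy x1 s) x2 (uyy x1 x2) /\
    - (uxx x1 x2 + uyy x1 x2) = lam * u x1 x2.

Definition unif_conv_0PI (f : R -> R -> R) (g : R -> R) : Prop :=
  forall eta, 0 < eta -> exists d, 0 < d /\
    forall delta t, 0 < delta < d -> 0 <= t <= PI ->
      Rabs (f delta t - g t) < eta.

(* Integrand of M on the half circle {|x - (a,0)| = δ, x2 > 0},
   parametrised by x = (a,0) + δ(cos t, sin t), t in [0,PI], ds = δ dt,
   with normal n = -(cos t, sin t) (pointing into the half disk). *)
Definition arc_integrand (lam a delta : R) (u ux uy : R -> R -> R) (t : R) : R :=
  let x1 := a + delta * cos t in
  let x2 := delta * sin t in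
  let n1 := - cos t in
  let n2 := - sin t in
  let g1 := ux x1 x2 in
  let g2 := uy x1 x2 in
  let xn := x1 * n1 + x2 * n2 in
  let dnu := g1 * n1 + g2 * n2 in
  let xgu := x1 * g1 + x2 * g2 in
  (/2 * (g1^2 + g2^2) * xn - dnu * xgu - lam / 2 * (u x1 x2)^2 * xn) * delta.

Definition is_RInt (f : R -> R) (a b v : R) : Prop :=
  exists pr : Riemann_integrable f a b, RiemannInt pr = v.

Definition M_value (eps : R) (jL jR : nat) (bL bR : R) : R :=
  if Nat.eqb jL 1 then
    (if Nat.eqb jR 1 then - eps * (PI / 8) * (bL^2 + bR^2)
     else - eps * (PI / 8) * bL^2)
  else
    (if Nat.eqb jR 1 then - eps * (PI / 8) * bR^2 else 0).

(* Main.v *)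
Require Import Defs.
From Stdlib Require Import Reals Lra Lia ClassicalEpsilon.
Open Scope R_scope.

Definition bnd (g : R -> R) := exists K, forall t, 0 <= t <= PI -> Rabs (g t) <= K.
Definition UCB (f : R -> R -> R) (g : R -> R) := unif_conv_0PI f g /\ bnd g.

Lemma UCB_plus f1 g1 f2 g2 : UCB f1 g1 -> UCB f2 g2 ->
  UCB (fun d t => f1 d t + f2 d t) (fun t => g1 t + g2 t).
Proof.
intros [H1 [K1 B1]] [H2 [K2 B2]]. split.
- intros eta Heta.
  destruct (H1 (eta/2)) as [d1 [Hd1 P1]]; [lra|].
  destruct (H2 (eta/2)) as [d2 [Hd2 P2]]; [lra|].
  exists (Rmin d1 d2); split; [apply Rmin_glb_lt; auto|].
  intros d t Hd Ht.
  pose proof (Rmin_l d1 d2); pose proof (Rmin_r d1 d2).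
  specialize (P1 d t ltac:(lra) Ht). specialize (P2 d t ltac:(lra) Ht).
  replace (f1 d t + f2 d t - (g1 t + g2 t)) with ((f1 d t - g1 t) + (f2 d t - g2 t)) by ring.
  pose proof (Rabs_triang (f1 d t - g1 t) (f2 d t - g2 t)). lra.
- exists (K1 + K2). intros t Ht. specialize (B1 t Ht); specialize (B2 t Ht).
  pose proof (Rabs_triang (g1 t) (g2 t)). lra.
Qed.

Lemma UCB_mult f1 g1 f2 g2 : UCB f1 g1 -> UCB f2 g2 ->
  UCB (fun d t => f1 d t * f2 d t) (fun t => g1 t * g2 t).
Proof.
intros [H1 [K1 B1]] [H2 [K2 B2]]. split.
- intros eta Heta.
  pose proof (Rabs_pos K1); pose proof (Rabs_pos K2).
  set (K := Rabs K1 + Rabs K2 + 1).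
  assert (HK: 0 < K) by (unfold K; lra).
  set (e := Rmin 1 (eta / K)).
  assert (He: 0 < e) by (unfold e; apply Rmin_glb_lt; [lra| apply Rdiv_lt_0_compat; lra]).
  assert (He1: e <= 1) by apply Rmin_l.
  assert (He2: e * K <= eta).
  { assert (e <= eta / K) by apply Rmin_r.
    apply (Rmult_le_compat_r K) in H3; [|lra].
    replace (eta / K * K) with eta in H3 by (field; lra). lra. }
  destruct (H1 e He) as [d1 [Hd1 P1]]; destruct (H2 e He) as [d2 [Hd2 P2]].
  exists (Rmin d1 d2); split; [apply Rmin_glb_lt; auto|].
  intros d t Hd Ht.
  pose proof (Rmin_l d1 d2); pose proof (Rmin_r d1 d2).
  specialize (P1 d t ltac:(lra) Ht). specialize (P2 d t ltac:(lra) Ht).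
  specialize (B1 t Ht); specialize (B2 t Ht).
  replace (f1 d t * f2 d t - g1 t * g2 t) with
    ((f1 d t - g1 t) * (f2 d t - g2 t) + (f1 d t - g1 t) * g2 t + g1 t * (f2 d t - g2 t)) by ring.
  set (a1 := f1 d t - g1 t) in *. set (a2 := f2 d t - g2 t) in *.
  pose proof (Rabs_triang (a1 * a2 + a1 * g2 t) (g1 t * a2)).
  pose proof (Rabs_triang (a1 * a2) (a1 * g2 t)).
  rewrite !Rabs_mult in *.
  pose proof (Rabs_pos a1); pose proof (Rabs_pos a2); pose proof (Rabs_pos (g1 t)); pose proof (Rabs_pos (g2 t)).
  pose proof (Rle_abs K1); pose proof (Rle_abs K2).
  assert (Rabs a1 * Rabs a2 <= Rabs a1 * 1) by (apply Rmult_le_compat_l; lra).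
  assert (Rabs a1 * Rabs (g2 t) <= e * Rabs K2) by (apply Rmult_le_compat; lra).
  assert (Rabs (g1 t) * Rabs a2 <= Rabs K1 * e) by (apply Rmult_le_compat; lra).
  unfold K in He2. nra.
- exists (Rabs K1 * Rabs K2). intros t Ht. specialize (B1 t Ht); specialize (B2 t Ht).
  rewrite Rabs_mult. pose proof (Rle_abs K1); pose proof (Rle_abs K2).
  apply Rmult_le_compat; try apply Rabs_pos; lra.
Qed.

Lemma UCB_const c : UCB (fun _ _ => c) (fun _ => c).
Proof.
split.
- intros eta H. exists 1. split; [lra|]. intros. rewrite Rminus_diag, Rabs_R0. lra.
- exists (Rabs c). intros; lra.
Qed.

Lemma UCB_delta : UCB (fun d _ => d) (fun _ => 0).
Proof.
split.
- intros eta H. exists eta. split; [lra|]. intros d t Hd _. rewrite Rminus_0_r, Rabs_pos_eq; lra.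
- exists 0. intros; rewrite Rabs_R0; lra.
Qed.

Lemma UCB_cosf h : UCB (fun _ t => cos (h t)) (fun t => cos (h t)).
Proof.
split.
- intros eta H. exists 1. split; [lra|]. intros. rewrite Rminus_diag, Rabs_R0. lra.
- exists 1. intros. apply Rabs_le. apply COS_bound.
Qed.

Lemma UCB_sinf h : UCB (fun _ t => sin (h t)) (fun t => sin (h t)).
Proof.
split.
- intros eta H. exists 1. split; [lra|]. intros. rewrite Rminus_diag, Rabs_R0. lra.
- exists 1. intros. apply Rabs_le. apply SIN_bound.
Qed.

Lemma UCB_opp f g : UCB f g -> UCB (fun d t => - f d t) (fun t => - g t).
Proof.
intros H. apply (UCB_mult (fun _ _ => -1) (fun _ => -1)) in H; [|apply UCB_const].
destruct H as [H1 [K B]]. split.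
- intros eta He. destruct (H1 eta He) as [d [Hd P]]. exists d; split; auto.
  intros. specialize (P delta t H H0). replace (- f delta t - - g t) with (-1 * f delta t - -1 * g t) by ring. auto.
- exists K. intros. specialize (B t H). replace (- g t) with (-1 * g t) by ring. auto.
Qed.

Lemma UCB_minus f1 g1 f2 g2 : UCB f1 g1 -> UCB f2 g2 ->
  UCB (fun d t => f1 d t - f2 d t) (fun t => g1 t - g2 t).
Proof. intros. apply UCB_plus; auto. apply UCB_opp; auto. Qed.

Lemma UCB_pow f g n : UCB f g -> UCB (fun d t => f d t ^ n) (fun t => g t ^ n).
Proof.
intros H. induction n.
- exact (UCB_const 1).
- apply (UCB_mult _ _ _ _ H IHn).
Qed.

Lemma UCB_ext f f' g : UCB f g ->
  (forall d t, 0 < d < 1 -> 0 <= t <= PI -> f d t = f' d t) -> UCB f' g.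
Proof.
intros [H B] E. split; auto.
intros eta He. destruct (H eta He) as [d [Hd P]]. exists (Rmin d 1).
split; [apply Rmin_glb_lt; lra|]. intros de t Hde Ht.
pose proof (Rmin_l d 1); pose proof (Rmin_r d 1).
rewrite <- E by (auto; lra). apply P; auto; lra.
Qed.

Lemma UCB_of f g f' : unif_conv_0PI f g -> UCB f' g -> UCB f g.
Proof. intros H [_ B]. split; auto. Qed.

Ltac ucb := repeat first
  [ assumption | apply UCB_const | apply UCB_delta | apply UCB_cosf | apply UCB_sinf
  | apply UCB_plus | apply UCB_minus | apply UCB_opp | apply UCB_mult | apply UCB_pow ].

Definition Pf (a d t A B : R) : R :=
  /2 * (A ^ 2 + B ^ 2) * ((a + d * cos t) * - cos t + d * sin t * - sin t)
  - (A * - cos t + B * - sin t) * ((a + d * cos t) * A + d * sin t * B).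

Lemma split_g d j v : 0 < d ->
  v = Rpower d (INR j / 2 - 1) * (Rpower d (- INR j / 2 + 1) * v).
Proof.
intros Hd. rewrite <- Rmult_assoc, <- Rpower_plus.
replace (INR j / 2 - 1 + (- INR j / 2 + 1)) with 0 by field. rewrite Rpower_O; auto; ring.
Qed.

Lemma split_u d j v : 0 < d ->
  v = Rpower d (INR j / 2) * (Rpower d (- INR j / 2) * v).
Proof.
intros Hd. rewrite <- Rmult_assoc, <- Rpower_plus.
replace (INR j / 2 + (- INR j / 2)) with 0 by field. rewrite Rpower_O; auto; ring.
Qed.

Lemma arc_decomp lam a d u ux uy j t : 0 < d -> (1 <= j)%nat ->
  arc_integrand lam a d u ux uy t =
  d ^ (j - 1) * Pf a d t
     (Rpower d (- INR j / 2 + 1) * ux (a + d * cos t) (d * sin t))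
     (Rpower d (- INR j / 2 + 1) * uy (a + d * cos t) (d * sin t))
  - lam / 2 * d ^ (j + 1) * (Rpower d (- INR j / 2) * u (a + d * cos t) (d * sin t)) ^ 2
     * ((a + d * cos t) * - cos t + d * sin t * - sin t).
Proof.
intros Hd Hj. unfold arc_integrand, Pf. cbv zeta.
set (vx := ux (a + d * cos t) (d * sin t)).
set (vy := uy (a + d * cos t) (d * sin t)).
set (vu := u (a + d * cos t) (d * sin t)).
set (A := Rpower d (- INR j / 2 + 1) * vx).
set (B := Rpower d (- INR j / 2 + 1) * vy).
set (U := Rpower d (- INR j / 2) * vu).
assert (EA : vx = Rpower d (INR j / 2 - 1) * A) by (apply split_g; auto).
assert (EB : vy = Rpower d (INR j / 2 - 1) * B) by (apply split_g; auto).
assert (EU : vu = Rpower d (INR j / 2) * U) by (apply split_u; auto).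
clearbody A B U. rewrite EA, EB, EU.
assert (E1 : d ^ (j - 1) = Rpower d (INR j / 2 - 1) ^ 2 * d).
{ rewrite <- Rpower_pow by auto. rewrite minus_INR by auto. simpl.
  rewrite Rmult_1_r, <- !Rpower_plus. rewrite <- (Rpower_1 d) at 3 by auto.
  rewrite <- Rpower_plus. f_equal. field. }
assert (E2 : d ^ (j + 1) = Rpower d (INR j / 2) ^ 2 * d).
{ rewrite <- Rpower_pow by auto. rewrite plus_INR. simpl.
  rewrite Rmult_1_r, <- !Rpower_plus. rewrite <- (Rpower_1 d) at 3 by auto.
  rewrite <- Rpower_plus. f_equal. field. }
rewrite E1, E2. ring.
Qed.

Lemma half_angle t : cos t = cos (INR 1 / 2 * t) ^ 2 - sin (INR 1 / 2 * t) ^ 2 /\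
  sin t = 2 * sin (INR 1 / 2 * t) * cos (INR 1 / 2 * t).
Proof.
assert (E: t = 2 * (INR 1 / 2 * t)) by (simpl; field).
split.
- rewrite E at 1. rewrite cos_2a. ring.
- rewrite E at 1. rewrite sin_2a. ring.
Qed.

Lemma PfL1 eps b t :
  Pf (- eps) 0 t
   (INR 1 * b / 2 * (cos (INR 1 / 2 * t) * cos t - sin (INR 1 / 2 * t) * - sin t))
   (INR 1 * b / 2 * (cos (INR 1 / 2 * t) * sin t - sin (INR 1 / 2 * t) * cos t))
  = - eps * b ^ 2 / 8.
Proof.
destruct (half_angle t) as [Hc Hs]. unfold Pf. rewrite Hc, Hs.
pose proof (sin2_cos2 (INR 1 / 2 * t)). unfold Rsqr in H.
set (c := cos (INR 1 / 2 * t)) in *. set (s := sin (INR 1 / 2 * t)) in *.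
simpl INR.
assert (s^2 = 1 - c^2) by (simpl; lra).
assert (s^4 = (1 - c^2)^2) by (rewrite <- H0; ring).
assert (s^6 = (1 - c^2)^3) by (rewrite <- H0; ring).
assert (s^8 = (1 - c^2)^4) by (rewrite <- H0; ring).
ring_simplify. rewrite H0, H1, H2, H3. field.
Qed.

Lemma PfR1 eps b t :
  Pf eps 0 t
   (INR 1 * b / 2 * (sin (INR 1 / 2 * t) * cos t + cos (INR 1 / 2 * t) * - sin t))
   (INR 1 * b / 2 * (sin (INR 1 / 2 * t) * sin t + cos (INR 1 / 2 * t) * cos t))
  = - eps * b ^ 2 / 8.
Proof.
destruct (half_angle t) as [Hc Hs]. unfold Pf. rewrite Hc, Hs.
pose proof (sin2_cos2 (INR 1 / 2 * t)). unfold Rsqr in H.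
set (c := cos (INR 1 / 2 * t)) in *. set (s := sin (INR 1 / 2 * t)) in *.
simpl INR.
assert (s^2 = 1 - c^2) by (simpl; lra).
assert (s^4 = (1 - c^2)^2) by (rewrite <- H0; ring).
assert (s^6 = (1 - c^2)^3) by (rewrite <- H0; ring).
assert (s^8 = (1 - c^2)^4) by (rewrite <- H0; ring).
ring_simplify. rewrite ?H0, ?H1, ?H2, ?H3. field.
Qed.

Lemma cplus f g x : continuity_pt f x -> continuity_pt g x -> continuity_pt (fun s => f s + g s) x.
Proof. intros; apply (continuity_pt_plus f g); auto. Qed.
Lemma cminus f g x : continuity_pt f x -> continuity_pt g x -> continuity_pt (fun s => f s - g s) x.
Proof. intros; apply (continuity_pt_minus f g); auto. Qed.
Lemma cmult f g x : continuity_pt f x -> continuity_pt g x -> continuity_pt (fun s => f s * g s) x.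
Proof. intros; apply (continuity_pt_mult f g); auto. Qed.
Lemma copp f x : continuity_pt f x -> continuity_pt (fun s => - f s) x.
Proof. intros; apply (continuity_pt_opp f); auto. Qed.
Lemma cconst c x : continuity_pt (fun _ => c) x.
Proof. apply continuity_pt_const. intros a b; reflexivity. Qed.
Lemma cpow f n x : continuity_pt f x -> continuity_pt (fun s => f s ^ n) x.
Proof. intros H; induction n; simpl; [apply cconst| apply cmult; auto]. Qed.
Lemma ccos x : continuity_pt (fun s => cos s) x.
Proof. apply continuity_cos. Qed.
Lemma csin x : continuity_pt (fun s => sin s) x.
Proof. apply continuity_sin. Qed.

Lemma arc_cont lam a d u ux uy t :
  continuity_pt (fun s => u (a + d * cos s) (d * sin s)) t ->
  continuity_pt (fun s => ux (a + d * cos s) (d * sin s)) t ->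
  continuity_pt (fun s => uy (a + d * cos s) (d * sin s)) t ->
  continuity_pt (arc_integrand lam a d u ux uy) t.
Proof.
intros H1 H2 H3. unfold arc_integrand. cbv zeta.
repeat first [ assumption | apply cconst | apply ccos | apply csin | apply cplus | apply cminus
  | apply copp | apply cmult | apply cpow ].
Qed.


Lemma int_close f c eta (pr : Riemann_integrable f 0 PI) :
  (forall t, 0 <= t <= PI -> Rabs (f t - c) < eta) -> Rabs (RiemannInt pr - c * PI) <= eta * PI.
Proof.
intros H. pose proof PI_RGT_0.
pose proof (RiemannInt_P15 (RiemannInt_P14 0 PI (c + eta))) as E1.
pose proof (RiemannInt_P15 (RiemannInt_P14 0 PI (c - eta))) as E2.
assert (I1 : RiemannInt pr <= RiemannInt (RiemannInt_P14 0 PI (c + eta))).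
{ apply RiemannInt_P19; [lra|]. intros x Hx. unfold fct_cte.
  specialize (H x ltac:(lra)). apply Rabs_def2 in H. lra. }
assert (I2 : RiemannInt (RiemannInt_P14 0 PI (c - eta)) <= RiemannInt pr).
{ apply RiemannInt_P19; [lra|]. intros x Hx. unfold fct_cte.
  specialize (H x ltac:(lra)). apply Rabs_def2 in H. lra. }
rewrite E1 in I1; rewrite E2 in I2. apply Rabs_le. nra.
Qed.

Lemma arc_UCB lam a u ux uy j gA gB gU : (1 <= j)%nat ->
  UCB (fun d t => Rpower d (- INR j / 2 + 1) * ux (a + d * cos t) (d * sin t)) gA ->
  UCB (fun d t => Rpower d (- INR j / 2 + 1) * uy (a + d * cos t) (d * sin t)) gB ->
  UCB (fun d t => Rpower d (- INR j / 2) * u (a + d * cos t) (d * sin t)) gU ->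
  UCB (fun d t => arc_integrand lam a d u ux uy t)
    (fun t => 0 ^ (j - 1) * Pf a 0 t (gA t) (gB t)
       - lam / 2 * 0 ^ (j + 1) * (gU t) ^ 2 * ((a + 0 * cos t) * - cos t + 0 * sin t * - sin t)).
Proof.
intros Hj HA HB HU.
eapply UCB_ext; [| intros d t Hd Ht; symmetry; apply arc_decomp; [lra | exact Hj]].
unfold Pf. ucb.
Qed.


Definition cst (eps : R) (j : nat) (b : R) := if Nat.eqb j 1 then - eps * b ^ 2 / 8 else 0.

Lemma M_value_eq eps jL jR bL bR : M_value eps jL jR bL bR = cst eps jL bL * PI + cst eps jR bR * PI.
Proof. unfold M_value, cst. destruct (Nat.eqb jL 1), (Nat.eqb jR 1); field. Qed.

Lemma cst_le eps j b : 0 < eps -> cst eps j b <= 0.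
Proof. intros. unfold cst. destruct (Nat.eqb j 1); [|lra]. pose proof (pow2_ge_0 b). nra. Qed.

Lemma odd_ge1 j : Nat.Odd j -> (1 <= j)%nat.
Proof. intros [m Hm]; lia. Qed.

Lemma ptL eps lam j b gU t : Nat.Odd j ->
  0 ^ (j - 1) * Pf (- eps) 0 t
   (INR j * b / 2 * (cos (INR j / 2 * t) * cos t - sin (INR j / 2 * t) * - sin t))
   (INR j * b / 2 * (cos (INR j / 2 * t) * sin t - sin (INR j / 2 * t) * cos t))
  - lam / 2 * 0 ^ (j + 1) * gU ^ 2 * ((- eps + 0 * cos t) * - cos t + 0 * sin t * - sin t)
  = cst eps j b.
Proof.
intros Hj. apply odd_ge1 in Hj. unfold cst.
rewrite (pow_i (j + 1)) by lia.
destruct (Nat.eqb_spec j 1) as [->|Hne].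
- rewrite PfL1. simpl. ring.
- rewrite pow_i by lia. ring.
Qed.

Lemma ptR eps lam j b gU t : Nat.Odd j ->
  0 ^ (j - 1) * Pf eps 0 t
   (INR j * b / 2 * (sin (INR j / 2 * t) * cos t + cos (INR j / 2 * t) * - sin t))
   (INR j * b / 2 * (sin (INR j / 2 * t) * sin t + cos (INR j / 2 * t) * cos t))
  - lam / 2 * 0 ^ (j + 1) * gU ^ 2 * ((eps + 0 * cos t) * - cos t + 0 * sin t * - sin t)
  = cst eps j b.
Proof.
intros Hj. apply odd_ge1 in Hj. unfold cst.
rewrite (pow_i (j + 1)) by lia.
destruct (Nat.eqb_spec j 1) as [->|Hne].
- rewrite PfR1. simpl. ring.
- rewrite pow_i by lia. ring.
Qed.

Theorem lemmaC5
  (Om : R -> R -> Prop) (eps0 eps lam : R)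
  (u ux uy uxx uyy : R -> R -> R)
  (jL jR : nat) (bL bR : R)
  (HOmopen : open2 Om) (HOmbdd : bounded2 Om)
  (HOmhalf : forall x1 x2, Om x1 x2 -> 0 < x2)
  (HOmseg : forall x1, - eps0 <= x1 <= eps0 -> in_boundary2 Om x1 0)
  (Heps : 0 < eps <= eps0)
  (Hpde : helmholtz_in Om lam u ux uy uxx uyy)
  (Hnontriv : exists x1 x2, Om x1 x2 /\ u x1 x2 <> 0)
  (HjL : Nat.Odd jL) (HjR : Nat.Odd jR) (HbL : bL <> 0) (HbR : bR <> 0)
  (Hreg : exists d, 0 < d /\ forall delta, 0 < delta < d ->
     forall t, 0 <= t <= PI ->
       continuity_pt (fun s => u (- eps + delta * cos s) (delta * sin s)) t /\
       continuity_pt (fun s => ux (- eps + delta * cos s) (delta * sin s)) t /\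
       continuity_pt (fun s => uy (- eps + delta * cos s) (delta * sin s)) t /\
       continuity_pt (fun s => u (eps + delta * cos s) (delta * sin s)) t /\
       continuity_pt (fun s => ux (eps + delta * cos s) (delta * sin s)) t /\
       continuity_pt (fun s => uy (eps + delta * cos s) (delta * sin s)) t)
  (HuL : unif_conv_0PI
     (fun delta t => Rpower delta (- INR jL / 2) * u (- eps + delta * cos t) (delta * sin t))
     (fun t => bL * cos (INR jL / 2 * t)))
  (HgL1 : unif_conv_0PI
     (fun delta t => Rpower delta (- INR jL / 2 + 1) * ux (- eps + delta * cos t) (delta * sin t))
     (fun t => INR jL * bL / 2 * (cos (INR jL / 2 * t) * cos t - sin (INR jL / 2 * t) * (- sin t))))
  (HgL2 : unif_conv_0PI
     (fun delta t => Rpower delta (- INR jL / 2 + 1) * uy (- eps + delta * cos t) (delta * sin t))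
     (fun t => INR jL * bL / 2 * (cos (INR jL / 2 * t) * sin t - sin (INR jL / 2 * t) * cos t)))
  (HuR : unif_conv_0PI
     (fun delta t => Rpower delta (- INR jR / 2) * u (eps + delta * cos t) (delta * sin t))
     (fun t => bR * sin (INR jR / 2 * t)))
  (HgR1 : unif_conv_0PI
     (fun delta t => Rpower delta (- INR jR / 2 + 1) * ux (eps + delta * cos t) (delta * sin t))
     (fun t => INR jR * bR / 2 * (sin (INR jR / 2 * t) * cos t + cos (INR jR / 2 * t) * (- sin t))))
  (HgR2 : unif_conv_0PI
     (fun delta t => Rpower delta (- INR jR / 2 + 1) * uy (eps + delta * cos t) (delta * sin t))
     (fun t => INR jR * bR / 2 * (sin (INR jR / 2 * t) * sin t + cos (INR jR / 2 * t) * cos t))) :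
  (exists d, 0 < d /\ exists IL IR : R -> R,
     (forall delta, 0 < delta < d ->
        is_RInt (arc_integrand lam (- eps) delta u ux uy) 0 PI (IL delta) /\
        is_RInt (arc_integrand lam eps delta u ux uy) 0 PI (IR delta)) /\
     limit1_in (fun delta => IL delta + IR delta) (fun delta => 0 < delta < d)
       (M_value eps jL jR bL bR) 0)
  /\ M_value eps jL jR bL bR <= 0.
Proof.
split; [| rewrite M_value_eq; pose proof PI_RGT_0;
  pose proof (cst_le eps jL bL ltac:(lra)); pose proof (cst_le eps jR bR ltac:(lra)); nra].
assert (UL : UCB (fun d t => arc_integrand lam (- eps) d u ux uy t)
   (fun t => 0 ^ (jL - 1) * Pf (- eps) 0 t
     (INR jL * bL / 2 * (cos (INR jL / 2 * t) * cos t - sin (INR jL / 2 * t) * (- sin t)))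
     (INR jL * bL / 2 * (cos (INR jL / 2 * t) * sin t - sin (INR jL / 2 * t) * cos t))
     - lam / 2 * 0 ^ (jL + 1) * (bL * cos (INR jL / 2 * t)) ^ 2
       * ((- eps + 0 * cos t) * - cos t + 0 * sin t * - sin t))).
{ apply (arc_UCB lam (- eps) u ux uy jL
    (fun t => INR jL * bL / 2 * (cos (INR jL / 2 * t) * cos t - sin (INR jL / 2 * t) * (- sin t)))
    (fun t => INR jL * bL / 2 * (cos (INR jL / 2 * t) * sin t - sin (INR jL / 2 * t) * cos t))
    (fun t => bL * cos (INR jL / 2 * t))).
  - apply odd_ge1; auto.
  - eapply UCB_of; [exact HgL1 | ucb].
  - eapply UCB_of; [exact HgL2 | ucb].
  - eapply UCB_of; [exact HuL | ucb]. }
assert (UR : UCB (fun d t => arc_integrand lam eps d u ux uy t)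
   (fun t => 0 ^ (jR - 1) * Pf eps 0 t
     (INR jR * bR / 2 * (sin (INR jR / 2 * t) * cos t + cos (INR jR / 2 * t) * (- sin t)))
     (INR jR * bR / 2 * (sin (INR jR / 2 * t) * sin t + cos (INR jR / 2 * t) * cos t))
     - lam / 2 * 0 ^ (jR + 1) * (bR * sin (INR jR / 2 * t)) ^ 2
       * ((eps + 0 * cos t) * - cos t + 0 * sin t * - sin t))).
{ apply (arc_UCB lam eps u ux uy jR
    (fun t => INR jR * bR / 2 * (sin (INR jR / 2 * t) * cos t + cos (INR jR / 2 * t) * (- sin t)))
    (fun t => INR jR * bR / 2 * (sin (INR jR / 2 * t) * sin t + cos (INR jR / 2 * t) * cos t))
    (fun t => bR * sin (INR jR / 2 * t))).
  - apply odd_ge1; auto.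
  - eapply UCB_of; [exact HgR1 | ucb].
  - eapply UCB_of; [exact HgR2 | ucb].
  - eapply UCB_of; [exact HuR | ucb]. }
destruct UL as [UL _]; destruct UR as [UR _].
destruct Hreg as [d0 [Hd0 Hreg]].
pose proof PI_RGT_0 as HPI.
assert (ExL : forall delta, 0 < delta < d0 -> exists v, is_RInt (arc_integrand lam (- eps) delta u ux uy) 0 PI v).
{ intros delta Hde.
  assert (pr : Riemann_integrable (arc_integrand lam (- eps) delta u ux uy) 0 PI).
  { apply continuity_implies_RiemannInt; [lra|]. intros t Ht.
    destruct (Hreg delta Hde t Ht) as (A1 & A2 & A3 & _). apply arc_cont; auto. }
  exists (RiemannInt pr), pr; reflexivity. }
assert (ExR : forall delta, 0 < delta < d0 -> exists v, is_RInt (arc_integrand lam eps delta u ux uy) 0 PI v).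
{ intros delta Hde.
  assert (pr : Riemann_integrable (arc_integrand lam eps delta u ux uy) 0 PI).
  { apply continuity_implies_RiemannInt; [lra|]. intros t Ht.
    destruct (Hreg delta Hde t Ht) as (_ & _ & _ & A1 & A2 & A3). apply arc_cont; auto. }
  exists (RiemannInt pr), pr; reflexivity. }
set (IL := fun delta => epsilon (inhabits 0) (fun v => is_RInt (arc_integrand lam (- eps) delta u ux uy) 0 PI v)).
set (IR := fun delta => epsilon (inhabits 0) (fun v => is_RInt (arc_integrand lam eps delta u ux uy) 0 PI v)).
assert (SL : forall delta, 0 < delta < d0 -> is_RInt (arc_integrand lam (- eps) delta u ux uy) 0 PI (IL delta)).
{ intros; apply epsilon_spec; auto. }
assert (SR : forall delta, 0 < delta < d0 -> is_RInt (arc_integrand lam eps delta u ux uy) 0 PI (IR delta)).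
{ intros; apply epsilon_spec; auto. }
exists d0. split; auto. exists IL, IR. split; [intros; split; auto|].
unfold limit1_in, limit_in. simpl. unfold R_dist. intros e He.
set (eta := e / (2 * PI + 1)).
assert (Heta : 0 < eta) by (unfold eta; apply Rdiv_lt_0_compat; lra).
assert (Heta2 : eta * (2 * PI + 1) = e) by (unfold eta; field; lra).
destruct (UL eta Heta) as [dL [HdL PL]]. destruct (UR eta Heta) as [dR [HdR PR]].
exists (Rmin dL dR). split; [apply Rmin_glb_lt; auto|].
intros x [Hx Hxa]. rewrite Rminus_0_r, Rabs_pos_eq in Hxa by lra.
pose proof (Rmin_l dL dR); pose proof (Rmin_r dL dR).
destruct (SL x Hx) as [prL EL]. destruct (SR x Hx) as [prR ER].
assert (BL : Rabs (RiemannInt prL - cst eps jL bL * PI) <= eta * PI).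
{ apply int_close. intros t Ht. specialize (PL x t ltac:(lra) Ht). cbv beta in PL.
  rewrite ptL in PL; auto. }
assert (BR : Rabs (RiemannInt prR - cst eps jR bR * PI) <= eta * PI).
{ apply int_close. intros t Ht. specialize (PR x t ltac:(lra) Ht). cbv beta in PR.
  rewrite ptR in PR; auto. }
rewrite EL in BL; rewrite ER in BR. rewrite M_value_eq.
replace (IL x + IR x - (cst eps jL bL * PI + cst eps jR bR * PI)) with
  ((IL x - cst eps jL bL * PI) + (IR x - cst eps jR bR * PI)) by ring.
pose proof (Rabs_triang (IL x - cst eps jL bL * PI) (IR x - cst eps jR bR * PI)).
nra.
Qed.
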